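(* Let $p$ be a prime and $n\ge2$, and let $l_1,\ldots,l_{n-1}$ be integers such that $l_{\alpha+\beta}\le l_\alpha+l_\beta$ for all $\alpha,\beta\ge1$ with $\alpha+\beta\le n-1$. Then $$\{B\in T_n^+(\mathbf{Q}_p): b_{j,k}\in p^{l_{k-j}}\mathbf{Z}_p\text{ when }j<k\}$$ is a compact open subring of $T_n^+(\mathbf{Q}_p)$, and $$\{A\in T^+(n,\mathbf{Q}_p): a_{j,k}\in p^{l_{k-j}}\mathbf{Z}_p\text{ when }j<k\}$$ is a compact open subgroup of $T^+(n,\mathbf{Q}_p)$. In particular $\{A\in T^+(n,\mathbf{Q}_p): \max_{j<k}|a_{j,k}|_p^{1/(k-j)}\le p^{-l}\}=\delta_{p^l}(T^+(n,\mathbf{Z}_p))$ is a compact open subgroup for each $l\in\mathbf{Z}$, and $T^+(n,\mathbf{Q}_p)$ has large compact open subgroups.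
   Context: $T_n^+(\mathbf{Q}_p)$ is the ring of strictly upper-triangular $n\times n$ matrices over $\mathbf{Q}_p$; $T^+(n,\mathbf{Q}_p)$ is the group of upper-triangular matrices with diagonal entries $1$, with the topology induced from $M_n(\mathbf{Q}_p)\cong\mathbf{Q}_p^{n^2}$; $T^+(n,\mathbf{Z}_p)$ is its subgroup with entries in $\mathbf{Z}_p$; $\delta_r$ multiplies the $(j,k)$ entry with $j<k$ by $r^{k-j}$. A topological group has large compact open subgroups if every compact subset is contained in a compact open subgroup. *)

(* Defs.v *)
From HB Require Import structures.
From mathcomp Require Import all_boot all_order all_algebra.
From mathcomp Require Import classical_sets reals exp.
From Stdlib Require List.
Set Implicit Arguments. Unset Strict Implicit. Unset Printing Implicit Defensive.
Import Order.TTheory GRing.Theory Num.Theory.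
Local Open Scope ring_scope.
Local Open Scope classical_set_scope.

Definition padic_val (p : nat) (q : rat) : int :=
  (logn p `|numq q|%N)%:Z - (logn p `|denq q|%N)%:Z.

Definition padic_abs (R : realType) (p : nat) (q : rat) : R :=
  if q == 0 then 0 else (p%:R : R) ^ (- padic_val p q).

(* (K, abs) is a field of p-adic numbers: a field with a non-archimedean
   absolute value that restricts to |.|_p on Q, in which Q is dense, and
   which is complete.  This determines (K, abs) up to unique isometric
   isomorphism, i.e. K "is" Q_p. *)
Definition is_Qp (p : nat) (R : realType) (K : fieldType) (abs : K -> R) : Prop :=
  (forall x, 0 <= abs x) /\
  (forall x, abs x = 0 <-> x = 0) /\
  (forall x y, abs (x * y) = abs x * abs y) /\
  (forall x y, abs (x + y) <= Num.max (abs x) (abs y)) /\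
  (forall q : rat, abs (ratr q) = padic_abs R p q) /\
  (forall (x : K) (e : R), 0 < e -> exists q : rat, abs (x - ratr q) < e) /\
  (forall u : nat -> K,
         (forall e : R, 0 < e -> exists N, forall m k, (N <= m)%N -> (N <= k)%N ->
              abs (u m - u k) < e) ->
         exists x, forall e : R, 0 < e -> exists N, forall m, (N <= m)%N ->
              abs (u m - x) < e).

Definition Zp (R : realType) (K : fieldType) (abs : K -> R) : set K :=
  [set x | abs x <= 1].
Definition pZp (R : realType) (K : fieldType) (abs : K -> R) (p : nat) (l : int) : set K :=
  [set x | exists z, Zp abs z /\ x = (p%:R : K) ^ l * z].

Definition Tn_plus (K : fieldType) (n : nat) : set 'M[K]_n :=
  [set B | forall j k : 'I_n, (k <= j)%N -> B j k = 0].
Definition T_plus (K : fieldType) (n : nat) : set 'M[K]_n :=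
  [set A | (forall j : 'I_n, A j j = 1) /\ (forall j k : 'I_n, (k < j)%N -> A j k = 0)].
Arguments Tn_plus : clear implicits.
Arguments T_plus : clear implicits.
Definition T_plus_Zp (R : realType) (K : fieldType) (abs : K -> R) (n : nat) : set 'M[K]_n :=
  [set A | T_plus K n A /\ forall j k : 'I_n, Zp abs (A j k)].

Definition delta (K : fieldType) (n : nat) (r : K) (A : 'M[K]_n) : 'M[K]_n :=
  \matrix_(j, k) (if (j < k)%N then r ^+ (k - j) * A j k else A j k).

Definition mx_close (R : realType) (K : fieldType) (abs : K -> R) (n : nat)
  (e : R) (A B : 'M[K]_n) : Prop := forall j k, abs (B j k - A j k) < e.

Definition rel_open (R : realType) (K : fieldType) (abs : K -> R) (n : nat)
  (X S : set 'M[K]_n) : Prop :=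
  S `<=` X /\
  forall A, S A -> exists e : R, 0 < e /\
    forall B, X B -> mx_close abs e A B -> S B.

Definition rel_compact (R : realType) (K : fieldType) (abs : K -> R) (n : nat)
  (X C : set 'M[K]_n) : Prop :=
  C `<=` X /\
  forall (I : Type) (U : I -> set 'M[K]_n),
    (forall i, rel_open abs X (U i)) ->
    C `<=` (fun A => exists i, U i A) ->
    exists s : seq I, C `<=` (fun A => exists2 i, Stdlib.Lists.List.In i s & U i A).

Definition is_subring_of (K : fieldType) (n : nat) (X S : set 'M[K]_n) : Prop :=
  [/\ S `<=` X, S 0, (forall A B, S A -> S B -> S (A - B)) & (forall A B, S A -> S B -> S (A *m B))].
Definition is_subgroup_of (K : fieldType) (n : nat) (X S : set 'M[K]_n) : Prop :=
  [/\ S `<=` X, S 1%:M, (forall A B, S A -> S B -> S (A *m B)) & (forall A, S A -> S (invmx A))].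

Definition compact_open_subring (R : realType) (K : fieldType) (abs : K -> R) (n : nat)
  (S : set 'M[K]_n) : Prop :=
  is_subring_of (Tn_plus K n) S /\ rel_compact abs (Tn_plus K n) S /\ rel_open abs (Tn_plus K n) S.
Definition compact_open_subgroup (R : realType) (K : fieldType) (abs : K -> R) (n : nat)
  (S : set 'M[K]_n) : Prop :=
  is_subgroup_of (T_plus K n) S /\ rel_compact abs (T_plus K n) S /\ rel_open abs (T_plus K n) S.

Definition has_large_compact_open_subgroups (R : realType) (K : fieldType) (abs : K -> R)
  (n : nat) : Prop :=
  forall C, rel_compact abs (T_plus K n) C ->
    exists S, compact_open_subgroup abs S /\ C `<=` S.

Definition ring_l (R : realType) (K : fieldType) (abs : K -> R) (p n : nat) (l : nat -> int)
  : set 'M[K]_n :=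
  [set B | Tn_plus K n B /\ forall j k : 'I_n, (j < k)%N -> pZp abs p (l (k - j)%N) (B j k)].
Definition group_l (R : realType) (K : fieldType) (abs : K -> R) (p n : nat) (l : nat -> int)
  : set 'M[K]_n :=
  [set A | T_plus K n A /\ forall j k : 'I_n, (j < k)%N -> pZp abs p (l (k - j)%N) (A j k)].

Definition max_root_norm (R : realType) (K : fieldType) (abs : K -> R) (n : nat)
  (A : 'M[K]_n) : R :=
  \big[Num.max/0]_(j < n) \big[Num.max/0]_(k < n | (j < k)%N)
     powR (abs (A j k)) ((k - j)%N%:R)^-1.
Arguments ring_l {R K} abs p n l.
Arguments group_l {R K} abs p n l.
Arguments T_plus_Zp {R K} abs n.
Arguments has_large_compact_open_subgroups {R K} abs n.

(* Main.v *)
Require Import Defs.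
From HB Require Import structures.
From mathcomp Require Import all_boot all_order all_algebra.
From mathcomp Require Import classical_sets reals exp.
From mathcomp Require Import zify ring lra.
From Stdlib Require List Classical_Prop.
Import Order.TTheory GRing.Theory Num.Theory.
Local Open Scope ring_scope.
Local Open Scope classical_set_scope.
Set Implicit Arguments. Unset Strict Implicit. Unset Printing Implicit Defensive.

Section Basics.
Variables (R : realType) (K : fieldType) (abs : K -> R) (p : nat).
Hypothesis Hp : prime p.
Hypothesis HK : is_Qp p abs.

Lemma abs_ge0 x : 0 <= abs x.
Proof. by case: HK. Qed.
Lemma abs_eq0 x : abs x = 0 <-> x = 0.
Proof. by case: HK => _ []. Qed.
Lemma abs0 : abs 0 = 0.
Proof. exact/abs_eq0. Qed.
Lemma absM x y : abs (x * y) = abs x * abs y.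
Proof. by case: HK => _ [] _ []. Qed.
Lemma abs_ult x y : abs (x + y) <= Num.max (abs x) (abs y).
Proof. by case: HK => _ [] _ [] _ []. Qed.
Lemma abs_rat q : abs (ratr q) = padic_abs R p q.
Proof. by case: HK => _ [] _ [] _ [] _ []. Qed.

Lemma abs1 : abs 1 = 1.
Proof.
have h := absM 1 1; rewrite mulr1 in h.
have hn : abs 1 != 0 by apply/eqP => /abs_eq0/eqP; rewrite oner_eq0.
by apply: (mulfI hn); rewrite mulr1 -h.
Qed.

Lemma absN x : abs (- x) = abs x.
Proof.
have h1 : abs (-1) = 1.
  have h := absM (-1) (-1); rewrite mulrNN mulr1 abs1 in h.
  have h0 := abs_ge0 (-1).
  apply/eqP; rewrite -(@eqrXn2 _ 2) // ?expr1n ?expr2 -?h //.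
by rewrite -mulN1r absM h1 mul1r.
Qed.

Lemma abs_subC x y : abs (x - y) = abs (y - x).
Proof. by rewrite -absN opprB. Qed.

Lemma absD_le x y r : abs x <= r -> abs y <= r -> abs (x + y) <= r.
Proof. move=> hx hy; apply: le_trans (abs_ult x y) _; by rewrite ge_max hx hy. Qed.

Lemma absD_lt x y r : abs x < r -> abs y < r -> abs (x + y) < r.
Proof. move=> hx hy; apply: le_lt_trans (abs_ult x y) _; by rewrite gt_max hx hy. Qed.

Lemma absB_le x y r : abs x <= r -> abs y <= r -> abs (x - y) <= r.
Proof. by move=> hx hy; apply: absD_le => //; rewrite absN. Qed.

Lemma abs_sum (I : Type) (s : seq I) (P : pred I) (F : I -> K) r :
  0 <= r -> (forall i, P i -> abs (F i) <= r) -> abs (\sum_(i <- s | P i) F i) <= r.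
Proof.
move=> r0 hF; apply: (big_ind (fun x => abs x <= r)).
- by rewrite abs0.
- by move=> x y; apply: absD_le.
- exact: hF.
Qed.

Lemma absX x k : abs (x ^+ k) = abs x ^+ k.
Proof. by elim: k => [|k ih]; rewrite ?expr0 ?abs1 // !exprS absM ih. Qed.

Lemma absV x : abs (x^-1) = (abs x)^-1.
Proof.
have [->|x0] := eqVneq x 0; first by rewrite invr0 abs0 invr0.
have h := absM x x^-1; rewrite mulfV // abs1 in h.
have ha : abs x != 0 by apply/eqP => /abs_eq0/eqP; rewrite (negPf x0).
by apply: (mulfI ha); rewrite -h mulfV.
Qed.

Lemma absXz x (z : int) : abs (x ^ z) = abs x ^ z.
Proof. by case: z => k; rewrite ?expr_pred ?absV absX. Qed.

Lemma abs_nat_le1 m : abs (m%:R) <= 1.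
Proof.
elim: m => [|m ih]; first by rewrite abs0.
by rewrite -addn1 natrD absD_le // abs1.
Qed.

Lemma abs_int_le1 (z : int) : abs (z%:~R) <= 1.
Proof. case: z => m; first exact: abs_nat_le1.
by rewrite NegzE mulrNz absN abs_nat_le1. Qed.

Lemma abs_p : abs (p%:R) = (p%:R)^-1.
Proof.
have := abs_rat p%:R; rewrite ratr_nat => ->; rewrite /padic_abs.
have hp0 : (p%:R : rat) != 0 by rewrite pnatr_eq0 -lt0n prime_gt0.
rewrite (negPf hp0) /padic_val.
have -> : (p%:R : rat) = (p%:Z)%:Q by [].
rewrite numq_int denq_int /= logn1 (logn_prime _ Hp) eqxx subr0.
by rewrite exprN1.
Qed.

End Basics.

Section Mat.
Variables (R : realType) (K : fieldType) (abs : K -> R) (p : nat).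
Hypothesis Hp : prime p.
Hypothesis HK : is_Qp p abs.
Variables (n : nat) (w : nat -> R).
Hypothesis Hw0 : forall d, 0 < w d.
Hypothesis Hwm : forall a b, (1 <= a)%N -> (1 <= b)%N -> (a + b <= n - 1)%N ->
  w a * w b <= w (a + b)%N.

Definition Rw : set 'M[K]_n :=
  [set B | Tn_plus K n B /\ forall j k : 'I_n, (j < k)%N -> abs (B j k) <= w (k - j)%N].
Definition Gw : set 'M[K]_n :=
  [set A | T_plus K n A /\ forall j k : 'I_n, (j < k)%N -> abs (A j k) <= w (k - j)%N].

Lemma ordF1 (j k : 'I_n) : (j < k)%N -> (j == k) = false.
Proof. by move=> h; apply/negbTE; apply/eqP => e; rewrite e ltnn in h. Qed.
Lemma ordF2 (j k : 'I_n) : (k < j)%N -> (j == k) = false.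
Proof. by move=> h; apply/negbTE; apply/eqP => e; rewrite e ltnn in h. Qed.

Lemma Rw0 : Rw 0.
Proof. split=> [j k _|j k _]; rewrite mxE //; rewrite (abs0 HK); exact/ltW. Qed.

Lemma RwB A B : Rw A -> Rw B -> Rw (A - B).
Proof.
move=> [hA1 hA2] [hB1 hB2]; split=> j k hjk; rewrite !mxE.
  by rewrite hA1 // hB1 // subr0.
exact: absB_le HK _ _ _ (hA2 _ _ hjk) (hB2 _ _ hjk).
Qed.

Lemma RwD A B : Rw A -> Rw B -> Rw (A + B).
Proof.
move=> hA hB; have := RwB hA (RwB Rw0 hB); by rewrite sub0r opprK.
Qed.

Lemma RwN A : Rw A -> Rw (- A).
Proof. by move=> hA; have := RwB Rw0 hA; rewrite sub0r. Qed.

Lemma RwM A B : Rw A -> Rw B -> Rw (A *m B).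
Proof.
move=> [hA1 hA2] [hB1 hB2]; split=> j k hjk; rewrite !mxE.
  rewrite big1 // => i _.
  case: (leqP i j) => hij; first by rewrite hA1 // mul0r.
  by rewrite hB1 ?mulr0 // (leq_trans hjk) // ltnW.
apply: (abs_sum HK); first exact/ltW.
move=> i _.
case: (leqP i j) => hij; first by rewrite hA1 // mul0r (abs0 HK); exact/ltW.
case: (leqP k i) => hik; first by rewrite hB1 // mulr0 (abs0 HK); exact/ltW.
rewrite (absM HK).
apply: le_trans (_ : w (i - j)%N * w (k - i)%N <= _).
  apply: ler_pM; [exact: (abs_ge0 HK (A j i))|exact: (abs_ge0 HK (B i k))|exact: hA2|exact: hB2].
have -> : (k - j = (i - j) + (k - i))%N by lia.
have := ltn_ord k.
move=> hk; apply: Hwm; lia.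
Qed.

Lemma Gw_Rw A : Gw A <-> Rw (A - 1%:M).
Proof.
split.
  move=> [[hd hl] hu]; split=> j k hjk; rewrite !mxE.
    case: (ltngtP k j) hjk => // hkj _.
      by rewrite hl // (ordF2 hkj) subr0.
    have -> : j = k by apply/val_inj.
    by rewrite hd eqxx subrr.
  by rewrite (ordF1 hjk) subr0; apply: hu.
move=> [hl hu]; split; first split.
- move=> j; have := hl j j (leqnn _); rewrite !mxE eqxx => /eqP.
  by rewrite subr_eq0 => /eqP.
- move=> j k hkj; have := hl j k (ltnW hkj); rewrite !mxE.
  by rewrite (ordF2 hkj) subr0.
- move=> j k hjk; have := hu j k hjk; by rewrite !mxE (ordF1 hjk) subr0.
Qed.

Lemma Gw_add A : Gw A -> A = 1%:M + (A - 1%:M).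
Proof. by move=> _; rewrite addrC subrK. Qed.

Lemma Gw1 : Gw 1%:M.
Proof. by apply/Gw_Rw; rewrite subrr; exact: Rw0. Qed.

Lemma GwM A B : Gw A -> Gw B -> Gw (A *m B).
Proof.
move=> /Gw_Rw hA /Gw_Rw hB; apply/Gw_Rw.
have -> : A *m B - 1%:M = (A - 1%:M) + (B - 1%:M) + (A - 1%:M) *m (B - 1%:M).
  have e : forall a b : 'M[K]_n, (a + 1%:M) *m (b + 1%:M) - 1%:M = a + b + a *m b.
    move=> a b; rewrite mulmxDl !mulmxDr !mulmx1 mul1mx.
    by rewrite ?mul1mx ?mulmx1 !addrA addrK [in RHS]addrC !addrA.
  by rewrite -e !subrK.
by apply: RwD; [apply: RwD|apply: RwM].
Qed.

Definition mpow (M : 'M[K]_n) i := iter i (mulmx M) 1%:M.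

Lemma mpow_zero M i (j k : 'I_n) : Tn_plus K n M -> (k < j + i)%N -> mpow M i j k = 0.
Proof.
move=> hM; elim: i j k => [|i ih] j k.
  by rewrite addn0 /mpow /= mxE => hkj; rewrite (ordF2 hkj).
move=> hk; rewrite /mpow /= mxE big1 // => m _.
case: (leqP m j) => hmj; first by rewrite hM // mul0r.
by rewrite ih ?mulr0 //; apply: leq_trans hk _; rewrite -addSnnS leq_add2r.
Qed.

Lemma Rw_mpow M i : Rw M -> (0 < i)%N -> Rw (mpow M i).
Proof.
move=> hM; elim: i => [|[|i] ih] // _.
  by rewrite /mpow /= mulmx1.
by have := RwM hM (ih isT).
Qed.

Lemma Rw_sum (F : nat -> 'M[K]_n) a b : (forall i, (a <= i < b)%N -> Rw (F i)) ->
  Rw (\sum_(a <= i < b) F i).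
Proof.
move=> hF; rewrite big_nat_cond; apply: (big_ind Rw); [exact: Rw0|exact: RwD|].
move=> i /andP[hi _]; exact: hF.
Qed.

Lemma GwV A : (0 < n)%N -> Gw A -> Gw (invmx A).
Proof.
move=> n0 hA; have hN := proj1 (Gw_Rw A) hA.
set M := - (A - 1%:M).
have hM : Rw M by apply: RwN.
set S := \sum_(0 <= i < n) mpow M i.
have hAS : A *m S = 1%:M.
  have -> : A = 1%:M - M by rewrite /M opprK addrC subrK.
  rewrite mulmxBl mul1mx /S mulmx_sumr.
  have -> : \sum_(0 <= i < n) M *m mpow M i = \sum_(0 <= i < n) mpow M i.+1 by [].
  rewrite -sumrB.
  have -> : \sum_(0 <= i < n) (mpow M i - mpow M i.+1) = - \sum_(0 <= i < n) (mpow M i.+1 - mpow M i).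
    by rewrite -sumrN; apply: eq_bigr => i _; rewrite opprB.
  rewrite telescope_sumr // opprB.
  have -> : mpow M n = 0.
    apply/matrixP => j k; rewrite mxE; apply: mpow_zero; first by case: hM.
    by apply: leq_trans (ltn_ord k) _; rewrite leq_addl.
  by rewrite subr0.
have hinv : invmx A = S.
  have [hu _] := mulmx1_unit hAS.
  by rewrite -[invmx A]mulmx1 -hAS mulmxA mulVmx // mul1mx.
rewrite hinv; apply/Gw_Rw.
rewrite /S big_ltn // /mpow /= addrAC subrr add0r.
apply: Rw_sum => i /andP[hi _]; exact: (Rw_mpow hM hi).
Qed.

Lemma w_lb N : exists e, 0 < e /\ forall d, (d < N)%N -> e <= w d.
Proof.
elim: N => [|N [e [e0 he]]]; first by exists 1.
exists (Num.min e (w N)); split; first by rewrite lt_min e0 Hw0.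
move=> d; rewrite ltnS leq_eqVlt => /orP[/eqP->|hd]; first by rewrite ge_min lexx orbT.
by rewrite ge_min he.
Qed.

Lemma entry_close (A B : 'M[K]_n) e (j k : 'I_n) : (forall j k, abs (B j k - A j k) < e) ->
  e <= w (k - j)%N -> abs (A j k) <= w (k - j)%N -> abs (B j k) <= w (k - j)%N.
Proof.
move=> hc he ha; have -> : B j k = A j k + (B j k - A j k) by rewrite addrC subrK.
by apply: (absD_le HK) => //; apply/ltW/(lt_le_trans (hc j k)).
Qed.

Lemma Rw_open : rel_open abs (Tn_plus K n) Rw.
Proof.
split; first by move=> A [].
move=> A [_ hA]; have [e [e0 he]] := w_lb n.
exists e; split => // B hB hc; split => // j k hjk.
apply: (entry_close hc) (hA _ _ hjk); apply: he.
by apply: leq_ltn_trans (ltn_ord k); apply: leq_subr.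
Qed.

Lemma Gw_open : rel_open abs (T_plus K n) Gw.
Proof.
split; first by move=> A [].
move=> A [_ hA]; have [e [e0 he]] := w_lb n.
exists e; split => // B hB hc; split => // j k hjk.
apply: (entry_close hc) (hA _ _ hjk); apply: he.
by apply: leq_ltn_trans (ltn_ord k); apply: leq_subr.
Qed.

End Mat.

Section Net.
Variables (R : realType) (K : fieldType) (abs : K -> R) (p : nat).
Hypothesis Hp : prime p.
Hypothesis HK : is_Qp p abs.

Lemma p_gt1 : (1 < p)%N. Proof. exact: prime_gt1. Qed.
Lemma pR_gt1 : 1 < (p%:R : R). Proof. by rewrite ltr1n p_gt1. Qed.
Lemma pR_gt0 : 0 < (p%:R : R). Proof. exact: lt_trans ltr01 pR_gt1. Qed.

Lemma c_gt0 : 0 < abs (p%:R). Proof. by rewrite (abs_p Hp HK) invr_gt0 pR_gt0. Qed.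
Lemma c_lt1 : abs (p%:R) < 1. Proof. by rewrite (abs_p Hp HK) invf_lt1 ?pR_gt0 ?pR_gt1. Qed.

Lemma abs_unit_int (z : int) : ~~ (p %| `|z|)%N -> abs (z%:~R) = 1.
Proof.
move=> hz; have := abs_rat HK (z%:~R); rewrite ratr_int => ->.
rewrite /padic_abs /padic_val numq_int denq_int.
have z0 : z != 0 by apply: contra hz => /eqP ->; rewrite dvdn0.
have -> : (z%:Q == 0) = false by apply/negbTE; rewrite intr_eq0.
rewrite logn1 /= lognE (negPf hz) !andbF /=.
by rewrite subrr oppr0 expr0z.
Qed.

Lemma abs_le1_den q : abs (ratr q) <= 1 -> ~~ (p %| `|denq q|)%N.
Proof.
rewrite (abs_rat HK) /padic_abs /padic_val => h; apply/negP => hd.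
have hq : q != 0.
  apply: contraTneq hd => ->; rewrite /=.
  by rewrite dvdn1; apply/negP => /eqP hp1; move: p_gt1; rewrite hp1.
rewrite (negPf hq) in h.
have ha : logn p `|numq q| = 0%N.
  rewrite lognE; case: ifP => // /and3P[_ _ hn].
  have := coprime_num_den q; rewrite /coprime => /eqP hg.
  have : (p %| gcdn `|numq q| `|denq q|)%N by rewrite dvdn_gcd hn hd.
  by rewrite hg dvdn1 => /eqP hp1; move: p_gt1; rewrite hp1.
have hb : (0 < logn p `|denq q|)%N.
  rewrite logn_gt0 mem_primes Hp hd andbT /=.
  by rewrite absz_gt0 gt_eqF // denq_gt0.
move: h; rewrite ha sub0r opprK -(prednK hb) => h.
have h' : (p%:R : R) ^+ (logn p `|denq q|).-1.+1 <= 1 := h.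
have : (p%:R : R) <= 1.
  apply: le_trans h'; rewrite exprSr ler_peMl ?(ltW pR_gt0) //.
  by rewrite exprn_ege1 // ltW // pR_gt1.
by rewrite leNgt pR_gt1.
Qed.

Lemma intr_neq0 (z : int) : z != 0 -> (z%:~R : K) != 0.
Proof.
move=> z0; apply/negP => /eqP h.
have := abs_rat HK (z%:~R); rewrite ratr_int h (abs0 HK) /padic_abs.
have -> : (z%:Q == 0) = false by apply/negbTE; rewrite intr_eq0.
by move/esym/eqP; rewrite expfz_eq0 pnatr_eq0 eqn0Ngt (prime_gt0 Hp) andbF.
Qed.

Lemma Zp_net (u : nat) x : abs x <= 1 ->
  exists m : nat, (m < p ^ u)%N /\ abs (x - m%:R) <= abs (p%:R) ^+ u.
Proof.
move=> hx.
have cu0 : 0 < abs (p%:R : K) ^+ u by rewrite exprn_gt0 // c_gt0.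
case: HK => _ [] _ [] _ [] _ [] _ [] hd _.
have [q hq] := hd x _ cu0.
have hq1 : abs (ratr q) <= 1.
  have -> : ratr q = x - (x - ratr q) by rewrite opprB addrC subrK.
  apply: (absB_le HK) => //; apply/ltW/(lt_le_trans hq).
  by rewrite exprn_ile1 ?(ltW c_lt1) // ltW // c_gt0.
have hpb := abs_le1_den hq1.
set a := numq q; set b := denq q.
have hb1 : abs (b%:~R : K) = 1 by apply: abs_unit_int.
have hcop : gcdz b (p ^ u)%:Z = 1.
  rewrite /gcdz /=; apply/eqP; rewrite -[_ == _]/(coprime _ _) coprime_sym.
  by apply: coprimeXl; rewrite prime_coprime.
have [u1 [v1 huv]] := Bezoutz b (p ^ u)%:Z; rewrite hcop in huv.
set P := (p ^ u)%:Z.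
have P0 : P != 0 by rewrite /P eqz_nat expn_eq0 eqn0Ngt (prime_gt0 Hp).
set m := ((a * u1) %% P)%Z.
have m0 : 0 <= m by apply: modz_ge0.
have mP : m < P by apply: ltz_pmod; rewrite lt0r P0 /P.
set d := ((a * u1) %/ P)%Z.
have hm : m = a * u1 - d * P.
  have e := divz_eq (a * u1) P; rewrite -/d -/m in e.
  by rewrite e addrAC subrr add0r.
have hz : a - m * b = (a * v1 + d * b) * P.
  have : a - m * b - (a * v1 + d * b) * P = a * (1 - (u1 * b + v1 * P)) by rewrite hm; ring.
  by rewrite huv subrr mulr0 => /eqP; rewrite subr_eq0 => /eqP.
exists `|m|%N; split.
  by move: mP; rewrite /P -(gez0_abs m0) ltz_nat.
have em : ((`|m|%N)%:R : K) = m%:~R by rewrite -(gez0_abs m0).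
have b0 : (b%:~R : K) != 0 by apply/eqP => h; move: hb1; rewrite h (abs0 HK) => /eqP; rewrite eq_sym oner_eq0.
have -> : x - (`|m|%N)%:R = (x - ratr q) + (a - m * b)%:~R / b%:~R.
  rewrite em /ratr -/a -/b intrB intrM.
  by field.
apply: (absD_le HK); first exact: ltW.
rewrite hz (absM HK) (absV HK) hb1 invr1 mulr1 intrM (absM HK).
rewrite /P -pmulrn natrX (absX HK).
apply: le_trans (_ : 1 * _ <= _); last by rewrite mul1r.
by apply: ler_wpM2r; [rewrite exprn_ge0 // (abs_ge0 HK)|apply: (abs_int_le1 HK)].
Qed.

End Net.

Lemma in_list (T : eqType) (x : T) (s : seq T) : x \in s -> Stdlib.Lists.List.In x s.
Proof. elim: s => // y s ih; rewrite in_cons => /orP[/eqP->|h]; [left|right] => //; exact: ih. Qed.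

Section Compact.
Variables (R : realType) (K : fieldType) (abs : K -> R) (p : nat).
Hypothesis Hp : prime p.
Hypothesis HK : is_Qp p abs.

Local Notation c := (abs (p%:R : K)).

Lemma pK0 : (p%:R : K) != 0.
Proof. by apply/eqP => h; have := c_gt0 Hp HK; rewrite h (abs0 HK) ltxx. Qed.

Lemma cXp s : c ^+ s * (p%:R : R) ^+ s = 1.
Proof. by rewrite -exprMn (abs_p Hp HK) mulVf ?expr1n // gt_eqF // pR_gt0. Qed.

Lemma ball_net (s t : nat) x : abs x <= (p%:R : R) ^+ s ->
  exists m : nat, (m < p ^ (t + s))%N /\ abs (x - m%:R / (p%:R ^+ s)) <= c ^+ t.
Proof.
move=> hx.
have cs0 : 0 < c ^+ s by rewrite exprn_gt0 // c_gt0.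
have hy : abs ((p%:R ^+ s) * x) <= 1.
  rewrite (absM HK) (absX HK) -(cXp s); apply: ler_wpM2l => //; exact: ltW.
have [m [hm hd]] := Zp_net Hp HK (t + s) hy.
exists m; split => //.
have ps0 : (p%:R ^+ s : K) != 0 by rewrite expf_neq0 // pK0.
have -> : x - m%:R / p%:R ^+ s = (p%:R ^+ s * x - m%:R) / p%:R ^+ s by field.
rewrite (absM HK) (absV HK) (absX HK).
rewrite ler_pdivrMr //; apply: le_trans hd _; by rewrite exprD.
Qed.

Lemma rho_small e : 0 < e -> exists t : nat, c ^+ t < e.
Proof.
move=> e0.
have ei : 0 <= e^-1 by rewrite invr_ge0 ltW.
set t := Num.Def.archi_bound e^-1.
exists t.
have ht := archi_boundP ei.
have hpt : (t%:R : R) <= (p%:R : R) ^+ t by rewrite -natrX ler_nat ltnW // ltn_expl // p_gt1.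
rewrite (abs_p Hp HK) exprVn -(invrK e) ltf_pV2 ?posrE ?exprn_gt0 ?pR_gt0 ?invr_gt0 //.
exact: lt_le_trans ht hpt.
Qed.

Lemma exists_pow_ge (M : R) : exists s : nat, M <= (p%:R : R) ^+ s.
Proof.
have h0 : 0 <= Num.max M 0 by rewrite le_max lexx orbT.
set s := Num.Def.archi_bound (Num.max M 0).
exists s; have hs := archi_boundP h0.
have hpt : (s%:R : R) <= (p%:R : R) ^+ s by rewrite -natrX ler_nat ltnW // ltn_expl // p_gt1.
apply: le_trans (ltW (lt_le_trans hs hpt)); by rewrite le_max lexx.
Qed.

Lemma closed_lim x a (r : R) : 0 <= r ->
  (forall e, 0 < e -> exists y, abs (x - y) < e /\ abs (y - a) <= r) -> abs (x - a) <= r.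
Proof.
move=> r0 h; rewrite leNgt; apply/negP => hr.
have [y [h1 h2]] := h _ (le_lt_trans r0 hr).
have : abs ((x - y) + (y - a)) < abs (x - a).
  by apply: (absD_lt HK) => //; apply: le_lt_trans h2 hr.
by rewrite addrA subrK ltxx.
Qed.

Definition ballm n (a : 'M[K]_n) (r : R) : set 'M[K]_n :=
  [set B | forall j k, abs (B j k - a j k) <= r].

End Compact.

Section Compact2.
Variables (R : realType) (K : fieldType) (abs : K -> R) (p : nat).
Hypothesis Hp : prime p.
Hypothesis HK : is_Qp p abs.
Variable n : nat.
Local Notation c := (abs (p%:R : K)).
Local Notation ball := (@ballm R K abs n).

Lemma rho_mono {k m : nat} : (k <= m)%N -> c ^+ m <= c ^+ k.
Proof. by move=> h; apply: ler_wiXn2l => //; [exact/ltW/(c_gt0 Hp HK)|exact/ltW/(c_lt1 Hp HK)]. Qed.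

Lemma rho_ge0 (k : nat) : 0 <= c ^+ k.
Proof. by rewrite exprn_ge0 // ltW // (c_gt0 Hp HK). Qed.

Lemma compact_crit (X C : set 'M[K]_n) :
  C `<=` X ->
  (exists M, forall A, C A -> forall j k, abs (A j k) <= M) ->
  (forall x : 'M[K]_n, (forall e, 0 < e -> exists A, C A /\ forall j k, abs (x j k - A j k) < e) -> C x) ->
  rel_compact abs X C.
Proof.
move=> hCX [M hM] hcl; split => // I U hU hcov.
pose cov (D : set 'M[K]_n) :=
  exists s : seq I, D `<=` (fun A => exists2 i, Stdlib.Lists.List.In i s & U i A).
apply: Classical_Prop.NNPP => hnfs; have hnC : ~ cov C := hnfs.
have [s hs] := exists_pow_ge Hp M.
pose nf (t : nat) (f : 'M['I_(p ^ (t + s))]_n) : 'M[K]_n :=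
  \matrix_(j, k) (((f j k : nat)%:R : K) / p%:R ^+ s).
have hnet : forall t A, C A -> exists f, ball (nf t f) (c ^+ t) A.
  move=> t A hA.
  have hex : forall jk : 'I_n * 'I_n, exists m : 'I_(p ^ (t + s)),
      abs (A jk.1 jk.2 - (m : nat)%:R / p%:R ^+ s) <= c ^+ t.
    move=> [j k]; have [m [hm hd]] := ball_net Hp HK t (le_trans (hM A hA j k) hs).
    by exists (Ordinal hm).
  have [g hg] := boolp.choice hex.
  exists (\matrix_(j, k) g (j, k)) => j k; rewrite !mxE; exact: (hg (j, k)).
have step : forall t (D : set 'M[K]_n), D `<=` C -> ~ cov D ->
    exists y, D y /\ ~ cov (C `&` ball y (c ^+ t)).
  move=> t D hDC hD.
  have [f hf] : exists f, ~ cov (D `&` ball (nf t f) (c ^+ t)).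
    apply: Classical_Prop.NNPP => hno; apply: hD.
    have hall : forall f, cov (D `&` ball (nf t f) (c ^+ t)).
      by move=> f; apply: Classical_Prop.NNPP => h; apply: hno; exists f.
    have [sf hsf] := boolp.choice hall.
    exists (Stdlib.Lists.List.flat_map sf (enum 'M['I_(p ^ (t + s))]_n)).
    move=> A hA; have [f hf] := hnet t A (hDC A hA).
    have [i hi hUi] := hsf f A (conj hA hf).
    exists i => //; apply/Stdlib.Lists.List.in_flat_map; exists f; split => //.
    by apply: in_list; rewrite mem_enum.
  have [y hy] : exists y, (D `&` ball (nf t f) (c ^+ t)) y.
    apply: Classical_Prop.NNPP => h; apply: hf; exists [::] => A hA.
    by exfalso; apply: h; exists A.
  exists y; split; first by case: hy.
  move=> [s' hs']; apply: hf; exists s' => A [hDA hbA]; apply: hs'; split; first exact: hDC.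
  move=> j k; have -> : A j k - y j k = (A j k - nf t f j k) - (y j k - nf t f j k).
    by rewrite opprB addrA subrK.
  by apply: (absB_le HK); [apply: hbA|case: hy => _; apply].
have [y0 [hy0C hy0]] := step 0%N C (fun A h => h) hnC.
have hg : forall tc : nat * 'M[K]_n, exists y,
    ~ cov (C `&` ball tc.2 (c ^+ tc.1)) ->
    (C `&` ball tc.2 (c ^+ tc.1)) y /\ ~ cov (C `&` ball y (c ^+ tc.1.+1)).
  move=> [t c0] /=; case: (Classical_Prop.classic (cov (C `&` ball c0 (c ^+ t)))) => h.
    by exists c0.
  have [y [hy1 hy2]] := step t.+1 _ (fun A h => proj1 h) h.
  by exists y.
have [g hg'] := boolp.choice hg.
pose st k := iter k (fun tc => (tc.1.+1, g tc)) (0%N, y0).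
have st1 : forall k, (st k).1 = k by elim=> //= k ->.
pose cs k := (st k).2.
have inv : forall k, ~ cov (C `&` ball (cs k) (c ^+ k)).
  elim=> [|k ih] //; have := hg' (st k); rewrite st1 => h.
  by have [_ h2] := h ih.
have hstep : forall k, (C `&` ball (cs k) (c ^+ k)) (cs k.+1).
  move=> k; have := hg' (st k); rewrite st1 => h.
  by have [h1 _] := h (inv k).
have hmono : forall k m, (k <= m)%N -> ball (cs k) (c ^+ k) (cs m).
  move=> k; elim=> [|m ih].
    by rewrite leqn0 => /eqP -> j l; rewrite subrr (abs0 HK) rho_ge0.
  rewrite leq_eqVlt => /orP[/eqP <- j l|hkm].
    by rewrite subrr (abs0 HK) rho_ge0.
  move=> j l; have -> : cs m.+1 j l - cs k j l = (cs m.+1 j l - cs m j l) + (cs m j l - cs k j l).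
    by rewrite addrA subrK.
  apply: (absD_le HK); last exact: ih hkm j l.
  have h2 := @rho_mono k m hkm; case: (hstep m) => _ /(_ j l) h1; exact: le_trans h1 h2.
have hlim : forall jk : 'I_n * 'I_n, exists x : K, forall e, 0 < e ->
    exists N, forall m, (N <= m)%N -> abs (cs m jk.1 jk.2 - x) < e.
  move=> [j k] /=; case: HK => _ [] _ [] _ [] _ [] _ [] _ hcomp.
  apply: (hcomp (fun m => cs m j k)) => e e0.
  have [t ht] := rho_small Hp HK e0.
  exists t => m m' hm hm'.
  have -> : cs m j k - cs m' j k = (cs m j k - cs t j k) - (cs m' j k - cs t j k).
    by rewrite opprB addrA subrK.
  apply: le_lt_trans ht; apply: (absB_le HK); [exact: hmono|exact: hmono].
have [xf hxf] := boolp.choice hlim.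
pose x : 'M[K]_n := \matrix_(j, k) xf (j, k).
have hxball : forall t, ball (cs t) (c ^+ t) x.
  move=> t j k; apply: (closed_lim HK (rho_ge0 t)) => e e0.
  have [N hN] := hxf (j, k) e e0.
  exists (cs (maxn N t) j k); split.
    rewrite mxE -(abs_subC HK); exact: hN (leq_maxl _ _).
  exact: hmono (leq_maxr _ _) j k.
have hxC : C x.
  apply: hcl => e e0; have [t ht] := rho_small Hp HK e0.
  exists (cs t); split.
    by case: t {ht hxball} => [|t] //; case: (hstep t).
  by move=> j k; apply: le_lt_trans ht; apply: hxball.
have [i hi] := hcov x hxC.
have [_ hUo] := hU i.
have [e [e0 hB]] := hUo x hi.
have [t ht] := rho_small Hp HK e0.
apply: (inv t); exists [:: i] => A [hCA hbA]; exists i; first by left.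
apply: hB; first exact: hCX.
move=> j k; apply: le_lt_trans ht.
have -> : A j k - x j k = (A j k - cs t j k) - (x j k - cs t j k) by rewrite opprB addrA subrK.
by apply: (absB_le HK); [apply: hbA|apply: hxball].
Qed.

End Compact2.

Section Main.
Variables (R : realType) (K : fieldType) (abs : K -> R) (p : nat).
Hypothesis Hp : prime p.
Hypothesis HK : is_Qp p abs.
Variables (n : nat) (w : nat -> R).
Hypothesis Hw0 : forall d, 0 < w d.
Hypothesis Hwm : forall a b, (1 <= a)%N -> (1 <= b)%N -> (a + b <= n - 1)%N ->
  w a * w b <= w (a + b)%N.

Lemma w_ub N : exists M, forall d, (d < N)%N -> w d <= M.
Proof.
elim: N => [|N [M hM]]; first by exists 0.
exists (Num.max M (w N)) => d; rewrite ltnS leq_eqVlt => /orP[/eqP->|hd].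
  by rewrite le_max lexx orbT.
by rewrite le_max hM.
Qed.

Lemma closure_entry (x : 'M[K]_n) (P : set 'M[K]_n) j k a r : 0 <= r ->
  (forall e, 0 < e -> exists A, P A /\ forall j k, abs (x j k - A j k) < e) ->
  (forall A, P A -> abs (A j k - a) <= r) -> abs (x j k - a) <= r.
Proof.
move=> r0 hcl hP; apply: (closed_lim HK r0) => e e0.
have [A [hA hc]] := hcl e e0; exists (A j k); split; [exact: hc|exact: hP].
Qed.

Lemma abs_le0 x : abs x <= 0 -> x = 0.
Proof. by move=> h; apply/(abs_eq0 HK)/eqP; rewrite eq_le h (abs_ge0 HK). Qed.

Lemma Rw_compact : rel_compact abs (Tn_plus K n) (Rw abs w).
Proof.
apply: (compact_crit Hp HK); first by move=> A [].
  have [M hM] := w_ub n; exists (Num.max M 0) => A [h1 h2] j k.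
  case: (ltnP j k) => hjk.
    apply: le_trans (h2 _ _ hjk) _; rewrite le_max hM ?orbT //.
    by apply: leq_ltn_trans (ltn_ord k); apply: leq_subr.
  by rewrite h1 // (abs0 HK) le_max lexx orbT.
move=> x hcl; split => j k hjk.
  apply: abs_le0; rewrite -[x j k]subr0; apply: closure_entry hcl _ => //.
  by move=> A [h1 _]; rewrite h1 // subr0 (abs0 HK).
rewrite -[x j k]subr0; apply: closure_entry hcl _; first exact/ltW.
by move=> A [_ h2]; rewrite subr0; apply: h2.
Qed.

Lemma Gw_compact : rel_compact abs (T_plus K n) (Gw abs w).
Proof.
apply: (compact_crit Hp HK); first by move=> A [].
  have [M hM] := w_ub n; exists (Num.max M 1) => A [[hd hl] h2] j k.
  case: (ltngtP j k) => hjk.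
  - apply: le_trans (h2 _ _ hjk) _; rewrite le_max hM ?orbT //.
    by apply: leq_ltn_trans (ltn_ord k); apply: leq_subr.
  - by rewrite hl // (abs0 HK) le_max ler01 orbT.
  - have -> : j = k by apply/val_inj.
    by rewrite hd (abs1 HK) le_max lexx orbT.
move=> x hcl; split; first split.
- move=> j; apply/eqP; rewrite -subr_eq0; apply/eqP/abs_le0.
  apply: closure_entry hcl _ => //.
  by move=> A [[hd _] _]; rewrite hd subrr (abs0 HK).
- move=> j k hjk; apply: abs_le0; rewrite -[x j k]subr0; apply: closure_entry hcl _ => //.
  by move=> A [[_ hl] _]; rewrite hl // subr0 (abs0 HK).
- move=> j k hjk; rewrite -[x j k]subr0; apply: closure_entry hcl _; first exact/ltW.
  by move=> A [_ h2]; rewrite subr0; apply: h2.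
Qed.

Lemma Rw_cos : compact_open_subring abs (@Rw _ _ abs n w).
Proof.
split; last split.
- split; first by move=> A [].
  + exact: (Rw0 HK).
  + move=> A B; exact: (RwB HK).
  + move=> A B; exact: (RwM Hp HK Hw0 Hwm).
- exact: Rw_compact.
- exact: (Rw_open HK).
Qed.

Lemma Gw_cog : (0 < n)%N -> compact_open_subgroup abs (@Gw _ _ abs n w).
Proof.
move=> n0; split; last split.
- split; first by move=> A [].
  + exact: (Gw1 HK).
  + move=> A B; exact: (GwM Hp HK Hw0 Hwm).
  + move=> A; exact: (GwV Hp HK Hw0 Hwm n0).
- exact: Gw_compact.
- exact: (Gw_open HK).
Qed.

End Main.

Section Final.
Variables (R : realType) (K : fieldType) (abs : K -> R) (p : nat).
Hypothesis Hp : prime p.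
Hypothesis HK : is_Qp p abs.
Local Notation c := (abs (p%:R : K)).

Lemma pKz0 (z : int) : (p%:R : K) ^ z != 0.
Proof. by rewrite expfz_neq0 // (pK0 Hp HK). Qed.

Lemma cz_gt0 (z : int) : 0 < c ^ z.
Proof. by rewrite exprz_gt0 // (c_gt0 Hp HK). Qed.

Lemma cz_eq (z : int) : c ^ z = (p%:R : R) ^ (- z).
Proof. by rewrite (abs_p Hp HK) exprz_inv. Qed.

Lemma pZp_iff (z : int) x : pZp abs p z x <-> abs x <= c ^ z.
Proof.
split.
  move=> [y [hy ->]]; rewrite (absM HK) (absXz HK).
  by rewrite ler_piMr ?(ltW (cz_gt0 z)).
move=> hx; exists ((p%:R ^ z)^-1 * x); split; last by rewrite mulrA mulfV ?mul1r // pKz0.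
rewrite /Defs.Zp /= (absM HK) (absV HK) (absXz HK) ler_pdivrMl ?cz_gt0 //.
by rewrite mulr1.
Qed.

Lemma cz_le (a b : int) : (b <= a) -> c ^ a <= c ^ b.
Proof. by move=> h; rewrite !cz_eq ler_eXz2l ?lerN2 // pR_gt1. Qed.

Lemma ring_l_eq n (l : nat -> int) : ring_l abs p n l = Rw abs (fun d => c ^ l d).
Proof.
apply/seteqP; split => B [h1 h2]; split => // j k hjk; first exact/pZp_iff/h2.
exact/pZp_iff/h2.
Qed.

Lemma group_l_eq n (l : nat -> int) : group_l abs p n l = Gw abs (fun d => c ^ l d).
Proof.
apply/seteqP; split => B [h1 h2]; split => // j k hjk; first exact/pZp_iff/h2.
exact/pZp_iff/h2.
Qed.

Lemma wl_mul n (l : nat -> int)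
  (Hl : forall a b : nat, (1 <= a)%N -> (1 <= b)%N -> (a + b <= n - 1)%N ->
          l (a + b)%N <= l a + l b) :
  forall a b, (1 <= a)%N -> (1 <= b)%N -> (a + b <= n - 1)%N ->
  c ^ l a * c ^ l b <= c ^ l (a + b)%N.
Proof.
move=> a b ha hb hab; rewrite -exprzDr; last by rewrite unitfE gt_eqF // (c_gt0 Hp HK).
exact/cz_le/Hl.
Qed.

Lemma big_max_le (I : Type) (s : seq I) (P : pred I) (F : I -> R) (b : R) :
  0 <= b -> (forall i, P i -> F i <= b) -> \big[Num.max/0]_(i <- s | P i) F i <= b.
Proof.
move=> b0 hF; apply: (big_ind (fun x => x <= b)) => //.
  by move=> x y hx hy; rewrite ge_max hx hy.
Qed.

Lemma le_big_max (I : eqType) (s : seq I) (P : pred I) (F : I -> R) i :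
  i \in s -> P i -> F i <= \big[Num.max/0]_(j <- s | P j) F j.
Proof.
elim: s => // a s ih; rewrite in_cons big_cons => /orP[/eqP <-|hi] hP.
  by rewrite hP le_max lexx.
case: ifP => _; last exact: ih.
by rewrite le_max (ih hi hP) orbT.
Qed.

Lemma powR_root_le (a b : R) (d : nat) : 0 <= a -> 0 <= b -> (0 < d)%N ->
  (powR a (d%:R)^-1 <= b) = (a <= b ^+ d).
Proof.
move=> a0 b0 d0.
have ha : (powR a (d%:R)^-1) ^+ d = a.
  rewrite -powR_mulrn ?powR_ge0 // -powRrM mulVf ?powRr1 //.
  by rewrite pnatr_eq0 -lt0n.
rewrite -{2}ha ler_pXn2r // ?nnegrE ?powR_ge0 //.
Qed.

Lemma Sm_eq n (m : int) :
  [set A | T_plus K n A /\ max_root_norm abs A <= (p%:R : R) ^ (- m)] =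
  Gw abs (fun d => ((p%:R : R) ^ (- m)) ^+ d).
Proof.
set b := (p%:R : R) ^ (- m).
have b0 : 0 < b by rewrite exprz_gt0 // pR_gt0.
apply/seteqP; split => A [hT h].
  split => // j k hjk.
  rewrite -(powR_root_le (abs_ge0 HK _) (ltW b0)) ?subn_gt0 //.
  apply: le_trans _ h; rewrite /max_root_norm.
  pose G j0 k0 := powR (abs (A j0 k0)) (((k0 - j0)%N)%:R)^-1.
  have h2 := @le_big_max _ (index_enum 'I_n) (fun k0 : 'I_n => (j < k0)%N) (G j) k (mem_index_enum k) hjk.
  have h1 := @le_big_max _ (index_enum 'I_n) (fun _ => true)
     (fun j0 : 'I_n => \big[Num.max/0]_(k0 < n | (j0 < k0)%N) G j0 k0) j (mem_index_enum j) isT.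
  exact: le_trans h2 h1.
split => //; apply: big_max_le; first exact: ltW.
move=> j _; apply: big_max_le; first exact: ltW.
move=> k hjk; rewrite (powR_root_le (abs_ge0 HK _) (ltW b0)) ?subn_gt0 //; exact: h.
Qed.

Lemma Gw_delta n (m : int) :
  Gw abs (fun d => ((p%:R : R) ^ (- m)) ^+ d) =
  delta ((p%:R : K) ^ m) @` T_plus_Zp abs n.
Proof.
set r := (p%:R : K) ^ m.
have r0 : r != 0 by apply: pKz0.
have hr : abs r = (p%:R : R) ^ (- m) by rewrite (absXz HK) cz_eq.
have rinv : abs (r^-1) = ((p%:R : R) ^ (- m))^-1 by rewrite (absV HK) hr.
have b0 : 0 < (p%:R : R) ^ (- m) by rewrite exprz_gt0 // pR_gt0.
apply/seteqP; split.
  move=> A [[hd hl] h].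
  exists (delta r^-1 A).
    split; first split.
    - by move=> j; rewrite mxE ltnn hd.
    - by move=> j k hkj; rewrite mxE ltnNge (ltnW hkj) /= hl.
    - move=> j k; rewrite /Defs.Zp /= mxE; case: ifP => hjk.
        rewrite (absM HK) (absX HK) rinv exprVn mulrC ler_pdivrMr ?exprn_gt0 // mul1r.
        exact: h.
      case: (ltngtP j k) hjk => // hkj _.
        by rewrite hl // (abs0 HK) ler01.
      have -> : j = k by apply/val_inj.
      by rewrite hd (abs1 HK).
  apply/matrixP => j k; rewrite !mxE; case: ifP => hjk; rewrite hjk //.
  by rewrite mulrA -exprMn mulfV // expr1n mul1r.
move=> _ [B [[hd hl] hz] <-]; split; first split.
- by move=> j; rewrite mxE ltnn hd.
- by move=> j k hkj; rewrite mxE ltnNge (ltnW hkj) /= hl.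
- move=> j k hjk; rewrite mxE hjk (absM HK) (absX HK) hr.
  apply: ler_piMr; [exact: exprn_ge0 (ltW b0)|exact: (hz j k)].
Qed.

Lemma entries_bound n (A : 'M[K]_n) : exists M, forall j k, abs (A j k) <= M.
Proof.
exists (\sum_(j < n) \sum_(k < n) abs (A j k)) => j k.
have hs : forall (G : 'I_n -> R) i, (forall i, 0 <= G i) -> G i <= \sum_(i0 < n) G i0.
  move=> G i hG; rewrite (bigD1 i) //= lerDl; apply: sumr_ge0 => i0 _; exact: hG.
apply: le_trans (hs (fun k0 => abs (A j k0)) k (fun i => abs_ge0 HK _)) _.
apply: (hs (fun j0 => \sum_(k0 < n) abs (A j0 k0)) j).
by move=> i; apply: sumr_ge0 => i0 _; apply: (abs_ge0 HK).
Qed.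

Lemma in_foldr_max (s : seq nat) i : Stdlib.Lists.List.In i s -> (i <= foldr maxn 0 s)%N.
Proof.
elim: s => //= a s ih [->|h]; first exact: leq_maxl.
exact: leq_trans (ih h) (leq_maxr _ _).
Qed.

Lemma large n : (0 < n)%N -> has_large_compact_open_subgroups abs n.
Proof.
move=> n0 C [hCX hcomp].
pose W (s : nat) := fun d : nat => (p%:R : R) ^+ (s * d).
have W0 : forall s d, 0 < W s d by move=> s d; rewrite exprn_gt0 // pR_gt0.
have Wm : forall s a b, W s a * W s b <= W s (a + b)%N.
  by move=> s a b; rewrite /W -exprD mulnDr.
pose U (s : nat) := Gw abs (W s) : set 'M[K]_n.
have hU : forall s, rel_open abs (T_plus K n) (U s) by move=> s; apply: (Gw_open HK).
have hcov : C `<=` (fun A => exists s, U s A).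
  move=> A hA; have [hd hl] := hCX A hA.
  have [M hM] := entries_bound A.
  have [s hs] := exists_pow_ge Hp M.
  exists s; split => // j k hjk.
  apply: le_trans (hM j k) _; apply: le_trans hs _.
  rewrite /W ler_eXn2l ?pR_gt1 // leq_pmulr // subn_gt0 //.
have [ss hss] := hcomp nat U hU hcov.
set s := foldr maxn 0 ss.
exists (U s); split; first exact: (Gw_cog Hp HK (W0 s) (fun a b _ _ _ => Wm s a b) n0).
move=> A hA; have [i hi [hT hA']] := hss A hA; split => // j k hjk.
apply: le_trans (hA' j k hjk) _.
rewrite /W ler_eXn2l ?pR_gt1 // leq_mul2r; apply/orP; right; exact: in_foldr_max.
Qed.

End Final.

Unset Implicit Arguments.

Theorem mainTheorem7 (p : nat) (n : nat) (R : realType) (K : fieldType) (abs : K -> R)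
  (Hp : prime p) (Hn : (2 <= n)%N) (HK : is_Qp p abs) (l : nat -> int)
  (Hl : forall a b : nat, (1 <= a)%N -> (1 <= b)%N -> (a + b <= n - 1)%N ->
          l (a + b)%N <= l a + l b) :
  [/\ compact_open_subring abs (ring_l abs p n l),
      compact_open_subgroup abs (group_l abs p n l),
      (forall m : int,
         [set A | T_plus K n A /\ max_root_norm abs A <= (p%:R : R) ^ (- m)]
           = delta ((p%:R : K) ^ m) @` T_plus_Zp abs n
         /\ compact_open_subgroup abs
              [set A | T_plus K n A /\ max_root_norm abs A <= (p%:R : R) ^ (- m)])
    & has_large_compact_open_subgroups abs n].
Proof.
have n0 : (0 < n)%N by apply: leq_trans Hn.
have W0 : forall d, 0 < abs (p%:R : K) ^ l d by move=> d; apply: (cz_gt0 Hp HK).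
have Wm := wl_mul Hp HK Hl.
split.
- rewrite (ring_l_eq Hp HK); exact: (Rw_cos Hp HK W0 Wm).
- rewrite (group_l_eq Hp HK); exact: (Gw_cog Hp HK W0 Wm n0).
- move=> m; rewrite (Sm_eq Hp HK); split; first exact: (Gw_delta Hp HK).
  apply: (Gw_cog Hp HK _ _ n0).
    by move=> d; rewrite exprn_gt0 // exprz_gt0 // pR_gt0.
  by move=> a b _ _ _; rewrite -exprD.
- exact: (large Hp HK n0).
Qed.
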